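(* Let $m\ge 1$ and let $f_i(z)=a_iz+b_i$, $i=1,\dots,m$, with $a_i,b_i\in\mathbb{C}$ and $0<|a_i|<1$, and let $K\subset\mathbb{C}$ be the attractor of the iterated function system $\{f_1,\dots,f_m\}$. Suppose $K$ is not a singleton. If an eventually periodic word $i_1i_2\cdots i_l(j_1\cdots j_k)^\infty\in\{1,\dots,m\}^{\mathbb{N}}$ is a coding of an extreme point of the convex hull $\mathrm{co}(K)$, then $a_{j_1}a_{j_2}\cdots a_{j_k}$ is a positive real number.
   Context: The attractor $K$ is the unique nonempty compact set with $K=\bigcup_{i=1}^m f_i(K)$. For a word $i_1i_2\cdots$ write $f_{i_1\cdots i_n}=f_{i_1}\circ\cdots\circ f_{i_n}$. If $\bigcap_{n\ge1} f_{i_1\cdots i_n}(K)=\{z\}$, the infinite word $i_1i_2\cdots$ is called a coding of the point $z\in K$. The notation $(j_1\cdots j_k)^\infty$ denotes infinite repetition of the block $j_1\cdots j_k$. *)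

(* Defs.v *)
From Stdlib Require Import Reals List.
From Coquelicot Require Import Coquelicot.
Open Scope R_scope.

Definition compactC (K : C -> Prop) : Prop :=
  forall (I : Type) (U : I -> C -> Prop),
    (forall i, @open C_UniformSpace (U i)) ->
    (forall z, K z -> exists i, U i z) ->
    exists l : list I, forall z, K z -> exists i, In i l /\ U i z.

Definition ifs_map (a b : nat -> C) (i : nat) (z : C) : C :=
  Cplus (Cmult (a i) z) (b i).

Definition is_attractor (m : nat) (a b : nat -> C) (K : C -> Prop) : Prop :=
  (exists z, K z) /\ compactC K /\
  (forall z, K z <-> exists i, (1 <= i <= m)%nat /\ exists x, K x /\ z = ifs_map a b i x).

(* f_{w_0 ... w_{n-1}} = f_{w_0} o ... o f_{w_{n-1}}
   (the word i_1 i_2 ... is represented by w with w (n-1) = i_n). *)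
Fixpoint word_comp (a b : nat -> C) (w : nat -> nat) (n : nat) (z : C) : C :=
  match n with
  | O => z
  | S n' => word_comp a b w n' (ifs_map a b (w n') z)
  end.

Definition is_coding (a b : nat -> C) (K : C -> Prop) (w : nat -> nat) (z : C) : Prop :=
  forall y, (forall n, (1 <= n)%nat -> exists x, K x /\ y = word_comp a b w n x) <-> y = z.

Definition convex_hull (K : C -> Prop) (z : C) : Prop :=
  exists (n : nat) (t : nat -> R) (p : nat -> C),
    (forall i, (i <= n)%nat -> 0 <= t i /\ K (p i)) /\
    sum_n t n = 1 /\
    z = sum_n (fun i => Cmult (RtoC (t i)) (p i)) n.

Definition extreme_point (S : C -> Prop) (z : C) : Prop :=
  S z /\
  forall (x y : C) (t : R), S x -> S y -> 0 < t < 1 ->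
    z = Cplus (Cmult (RtoC t) x) (Cmult (RtoC (1 - t)) y) -> x = y.

Fixpoint prod_block (a : nat -> C) (w : nat -> nat) (s k : nat) : C :=
  match k with
  | O => RtoC 1
  | S k' => Cmult (a (w s)) (prod_block a w (S s) k')
  end.

(* Main.v *)
Require Import Defs.
From Stdlib Require Import Reals List Lra Lia Classical.
From Coquelicot Require Import Coquelicot.
Open Scope R_scope.

Section Aux.
Local Open Scope C_scope.

Definition sh (w : nat -> nat) (s : nat) : nat -> nat := fun i => w (s + i)%nat.

Lemma pb_S_r a w s n : prod_block a w s (S n) = prod_block a w s n * a (w (s + n)%nat).
Proof.
  revert s; induction n as [|n IH]; intros s.
  - simpl. rewrite Nat.add_0_r; ring.
  - change (prod_block a w s (S (S n))) with (a (w s) * prod_block a w (S s) (S n)).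
    change (prod_block a w s (S n)) with (a (w s) * prod_block a w (S s) n).
    rewrite IH. replace (S s + n)%nat with (s + S n)%nat by lia. ring.
Qed.

Lemma pb_shift a w s t n : prod_block a w (s + t) n = prod_block a (sh w s) t n.
Proof.
  revert t; induction n as [|n IH]; intros t; simpl; auto.
  replace (S (s + t)) with (s + S t)%nat by lia. rewrite IH. reflexivity.
Qed.

Lemma wc_diff a b w n x y :
  word_comp a b w n x - word_comp a b w n y = prod_block a w 0 n * (x - y).
Proof.
  revert x y; induction n as [|n IH]; intros x y.
  - simpl. ring.
  - change (word_comp a b w (S n) x) with (word_comp a b w n (ifs_map a b (w n) x)).
    change (word_comp a b w (S n) y) with (word_comp a b w n (ifs_map a b (w n) y)).
    rewrite IH, (pb_S_r a w 0 n). simpl. unfold ifs_map. ring.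
Qed.

Lemma wc_add a b w n r x :
  word_comp a b w (n + r) x = word_comp a b w n (word_comp a b (sh w n) r x).
Proof.
  revert x; induction r as [|r IH]; intros x.
  - rewrite Nat.add_0_r; reflexivity.
  - rewrite Nat.add_succ_r. simpl. rewrite IH. reflexivity.
Qed.

Lemma wc_ext a b w v n x : (forall i, w i = v i) -> word_comp a b w n x = word_comp a b v n x.
Proof.
  intros H; revert x; induction n as [|n IH]; intros x; simpl; auto.
  rewrite IH, H. reflexivity.
Qed.

Lemma wc_K m a b K w n x : is_attractor m a b K -> (forall i, (1 <= w i <= m)%nat) ->
  K x -> K (word_comp a b w n x).
Proof.
  intros [_ [_ HK]] Hw; revert x; induction n as [|n IH]; intros x Hx; simpl; auto.
  apply IH. apply HK. exists (w n). split; auto. exists x; auto.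
Qed.

Lemma pb_mod m a w s n : (forall i, (1 <= i <= m)%nat -> 0 < Cmod (a i) < 1) ->
  (forall i, (1 <= w i <= m)%nat) ->
  0 < Cmod (prod_block a w s n) /\ ((1 <= n)%nat -> Cmod (prod_block a w s n) < 1).
Proof.
  intros Ha Hw; revert s; induction n as [|n IH]; intros s; simpl.
  - rewrite Cmod_1. split; [lra| intros; lia].
  - rewrite Cmod_mult. destruct (IH (S s)) as [H1 H2]. destruct (Ha (w s) (Hw s)) as [H3 H4].
    split. apply Rmult_lt_0_compat; auto.
    intros _. destruct n. simpl. rewrite Cmod_1. lra.
    specialize (H2 ltac:(lia)). nra.
Qed.

End Aux.

Definition sq_set (r : R) : C -> Prop := fun y => Rabs (fst y) < r /\ Rabs (snd y) < r.

Lemma sq_open r : @open C_UniformSpace (sq_set r).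
Proof.
  intros [y1 y2] [H1 H2]; simpl in *.
  assert (He : 0 < Rmin (r - Rabs y1) (r - Rabs y2)) by (apply Rmin_pos; lra).
  exists (mkposreal _ He). intros [x1 x2] [B1 B2]. simpl in *.
  change (Rabs (x1 - y1) < Rmin (r - Rabs y1) (r - Rabs y2)) in B1.
  change (Rabs (x2 - y2) < Rmin (r - Rabs y1) (r - Rabs y2)) in B2.
  pose proof (Rmin_l (r - Rabs y1) (r - Rabs y2)).
  pose proof (Rmin_r (r - Rabs y1) (r - Rabs y2)).
  split; simpl.
  - pose proof (Rabs_triang (x1 - y1) y1). replace (x1 - y1 + y1) with x1 in H3 by ring. lra.
  - pose proof (Rabs_triang (x2 - y2) y2). replace (x2 - y2 + y2) with x2 in H3 by ring. lra.
Qed.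

Fixpoint lmax (l : list nat) : R :=
  match l with nil => 0 | cons i l' => Rmax (INR i) (lmax l') end.

Lemma lmax_in i l : In i l -> INR i <= lmax l.
Proof.
  induction l as [|j l IH]; simpl; [tauto|].
  intros [->|H]. apply Rmax_l. eapply Rle_trans; [apply IH; auto| apply Rmax_r].
Qed.

Lemma compact_bounded K : compactC K -> exists M, forall x, K x -> Cmod x <= M.
Proof.
  intros HK.
  destruct (HK nat (fun n => sq_set (INR n)) (fun n => sq_open _)) as [l Hl].
  - intros z _. destruct (INR_unbounded (Rmax (Rabs (fst z)) (Rabs (snd z)))) as [n Hn].
    exists n. unfold sq_set. pose proof (Rmax_l (Rabs (fst z)) (Rabs (snd z))).
    pose proof (Rmax_r (Rabs (fst z)) (Rabs (snd z))). split; lra.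
  - exists (sqrt 2 * lmax l). intros x Hx. destruct (Hl x Hx) as [i [Hi [U1 U2]]].
    pose proof (lmax_in i l Hi). eapply Rle_trans; [apply Cmod_2Rmax|].
    apply Rmult_le_compat_l. apply sqrt_pos.
    apply Rmax_lub; lra.
Qed.

Lemma Cmod_sq (x : C) : Cmod x ^ 2 = Re x ^ 2 + Im x ^ 2.
Proof.
  unfold Cmod, Re, Im. rewrite pow2_sqrt; auto.
  pose proof (pow2_ge_0 (fst x)); pose proof (pow2_ge_0 (snd x)); lra.
Qed.

Lemma Re_sq (x : C) : Re (x * x)%C = Re x ^ 2 - Im x ^ 2.
Proof. destruct x as [x1 x2]; unfold Re, Im; simpl. ring. Qed.

Lemma exists_nonpos_re (A : C) : A <> 0%C -> ~ (Im A = 0 /\ 0 < Re A) ->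
  exists N, Re (Cpow A N) <= 0.
Proof.
  intros HA HnA. apply NNPP; intros Hall.
  assert (Hpos : forall N, 0 < Re (Cpow A N)).
  { intros N. apply Rnot_le_lt. intros H. apply Hall. exists N; auto. }
  assert (HIm : Im A <> 0).
  { intros H. apply HnA. split; auto. pose proof (Hpos 1%nat). rewrite Cpow_1_r in H0. auto. }
  set (B := fun j => Cpow A (2 ^ j)).
  set (c := fun j => Re (B j) / Cmod (B j)).
  assert (HBm : forall j, 0 < Cmod (B j)).
  { intros j. apply Cmod_gt_0. apply Cpow_nz; auto. }
  assert (HBS : forall j, B (S j) = (B j * B j)%C).
  { intros j. unfold B. rewrite <- Cpow_add_r. f_equal. simpl. lia. }
  assert (Hc : forall j, 0 < c j /\ c j <= 1).
  { intros j. unfold c. pose proof (HBm j). pose proof (Hpos (2 ^ j)%nat).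
    fold (B j) in H0. split. apply Rdiv_lt_0_compat; auto.
    apply Rmult_le_reg_r with (Cmod (B j)); auto. field_simplify; [|lra].
    pose proof (re_le_Cmod (B j)). pose proof (Rle_abs (Re (B j))). lra. }
  assert (Hrec : forall j, c (S j) = 2 * c j ^ 2 - 1).
  { intros j. unfold c. rewrite HBS, Re_sq, Cmod_mult.
    pose proof (Cmod_sq (B j)). pose proof (HBm j).
    apply Rmult_eq_reg_r with (Cmod (B j) ^ 2); [|apply pow_nonzero; lra].
    field_simplify; try lra. }
  assert (Hc0 : c 0%nat < 1).
  { unfold c, B. simpl pow. rewrite Cpow_1_r. pose proof (Cmod_sq A).
    pose proof (Cmod_gt_0 A) as [H1 _]. specialize (H1 HA).
    apply Rmult_lt_reg_r with (Cmod A); auto. field_simplify; [|lra].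
    assert (Im A ^ 2 > 0) by (apply pow2_gt_0 ; auto).
    pose proof (Hpos 1%nat). rewrite Cpow_1_r in H2. nra. }
  assert (Hind : forall j, (1 - c j) * (1/2) ^ j >= 1 - c 0%nat).
  { induction j as [|j IH]. simpl; lra.
    rewrite Hrec. simpl pow. destruct (Hc j).
    assert (0 < (1/2) ^ j) by (apply pow_lt; lra).
    nra. }
  destruct (pow_lt_1_zero (1/2) ltac:(rewrite Rabs_pos_eq; lra) (1 - c 0%nat) ltac:(lra)) as [N HN].
  specialize (HN N (le_n N)). rewrite Rabs_pos_eq in HN by (apply pow_le; lra).
  specialize (Hind N). destruct (Hc N).
  assert (0 < (1/2) ^ N) by (apply pow_lt; lra). nra.
Qed.

Lemma ch_pt K x : K x -> convex_hull K x.
Proof.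
  intros Hx. exists 0%nat, (fun _ => 1), (fun _ => x). split; [|split].
  - intros i _. split; [lra|auto].
  - rewrite sum_O. reflexivity.
  - rewrite sum_O. apply injective_projections; destruct x; simpl; ring.
Qed.

Lemma ch_two K x y s : K x -> K y -> 0 <= s <= 1 ->
  convex_hull K (Cplus (Cmult (RtoC s) x) (Cmult (RtoC (1 - s)) y)).
Proof.
  intros Hx Hy Hs. exists 1%nat, (fun i => match i with O => s | _ => 1 - s end),
    (fun i => match i with O => x | _ => y end). split; [|split].
  - intros [|i] _; split; auto; lra.
  - rewrite sum_Sn, sum_O. simpl. unfold plus; simpl. ring.
  - rewrite sum_Sn, sum_O. reflexivity.
Qed.

Lemma key_id (B d : C) :
  Cplus (Cplus (Cmult (RtoC (Re B ^ 2 + Im B ^ 2)) d) (Cmult (Cmult (RtoC (-2 * Re B)) B) d))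
    (Cmult (Cmult B B) d) = RtoC 0.
Proof.
  destruct B as [b1 b2], d as [d1 d2]. unfold Re, Im. apply injective_projections; simpl; ring.
Qed.

Theorem theorem1p1 (m : nat) (a b : nat -> C) (K : C -> Prop)
  (w : nat -> nat) (l k : nat) (z : C) :
  (1 <= m)%nat ->
  (forall i, (1 <= i <= m)%nat -> 0 < Cmod (a i) < 1) ->
  is_attractor m a b K ->
  ~ (exists z0, forall y, K y <-> y = z0) ->
  (forall n, (1 <= w n <= m)%nat) ->
  (1 <= k)%nat ->
  (forall n, w (l + n + k)%nat = w (l + n)%nat) ->
  is_coding a b K w z ->
  extreme_point (convex_hull K) z ->
  Im (prod_block a w l k) = 0 /\ 0 < Re (prod_block a w l k).
Proof.
  intros Hm Ha Hatt Hns Hw Hk Hper Hcod Hext.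
  set (A := prod_block a w l k).
  set (w' := sh w l).
  assert (Hw' : forall i, (1 <= w' i <= m)%nat) by (intros i; apply Hw).
  assert (Hper' : forall j i, w' (j * k + i)%nat = w' i).
  { induction j as [|j IH]; intros i; [reflexivity|].
    unfold w', sh in *. replace (l + (S j * k + i))%nat with (l + (j * k + i) + k)%nat by lia.
    rewrite Hper. apply IH. }
  set (h := word_comp a b w' k).
  assert (hd : forall x y, (h x - h y = A * (x - y))%C).
  { intros x y. unfold h. rewrite wc_diff. f_equal. unfold A.
    pose proof (pb_shift a w l 0 k) as E. rewrite Nat.add_0_r in E. rewrite E. reflexivity. }
  set (Hn := fun n => word_comp a b w' (n * k)).
  assert (HnS : forall n x, Hn (S n) x = Hn n (h x)).
  { intros n x. unfold Hn. rewrite Nat.mul_succ_l, wc_add. f_equal.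
    apply wc_ext. intros i. unfold sh at 1. apply Hper'. }
  assert (Hnd : forall n x y, (Hn n x - Hn n y = Cpow A n * (x - y))%C).
  { induction n as [|n IH]; intros x y. change (Hn 0%nat x) with x. change (Hn 0%nat y) with y.
    replace (Cpow A 0) with (RtoC 1) by reflexivity. ring.
    rewrite !HnS, IH, hd. rewrite Cpow_S. ring. }
  assert (HnK : forall n x, K x -> K (Hn n x)).
  { intros n x Hx. unfold Hn. eapply wc_K; eauto. }
  destruct (pb_mod m a w l k Ha Hw) as [HA0 HA1]. specialize (HA1 Hk). fold A in HA0, HA1.
  assert (HAnz : A <> 0%C) by (apply Cmod_gt_0; auto).
  assert (H1A : (1 - A)%C <> 0%C).
  { intros E. assert (EA : A = RtoC 1).
    { replace A with (RtoC 1 - (RtoC 1 - A))%C by ring. rewrite E. ring. }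
    rewrite EA, Cmod_1 in HA1. lra. }
  set (p := (h 0%C / (1 - A))%C).
  assert (hp : h p = p).
  { pose proof (hd p 0%C) as E.
    replace (h p) with (h p - h 0%C + h 0%C)%C by ring. rewrite E.
    unfold p. field. auto. }
  assert (Hnp : forall n, Hn n p = p).
  { induction n as [|n IH]; [reflexivity|]. rewrite HnS, hp. auto. }
  set (g := word_comp a b w l). set (al := prod_block a w 0 l).
  assert (gd : forall x y, (g x - g y = al * (x - y))%C) by (intros; apply wc_diff).
  assert (Hal : 0 < Cmod al) by (apply (pb_mod m a w 0 l Ha Hw)).
  assert (Halnz : al <> 0%C) by (apply Cmod_gt_0; auto).
  assert (gK : forall x, K x -> K (g x)) by (intros x Hx; eapply wc_K; eauto).
  assert (Hcat : forall n x, word_comp a b w (l + n * k) x = g (Hn n x)).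
  { intros n x. rewrite wc_add. reflexivity. }
  destruct Hatt as [[y0 Hy0] [Hcomp HKinv]] eqn:Hatt'.
  destruct (compact_bounded K Hcomp) as [M HM].
  assert (HM0 : 0 <= M) by (eapply Rle_trans; [apply Cmod_ge_0| apply HM; eauto]).
  assert (Hz : z = g p).
  { apply NNPP; intros Hne.
    assert (He : 0 < Cmod (z - g p)%C).
    { apply Cmod_gt_0. intros E. apply Hne.
      replace z with (z - g p + g p)%C by ring. rewrite E. ring. }
    set (Cst := Cmod al * (M + Cmod p)).
    assert (HCst : 0 <= Cst).
    { unfold Cst. apply Rmult_le_pos. apply Cmod_ge_0. pose proof (Cmod_ge_0 p). lra. }
    destruct (pow_lt_1_zero (Cmod A) ltac:(rewrite Rabs_pos_eq; lra)
       (Cmod (z - g p)%C / (Cst + 1)) ltac:(apply Rdiv_lt_0_compat; lra)) as [N HN].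
    set (n := Nat.max N 1).
    specialize (HN n ltac:(unfold n; lia)). rewrite Rabs_pos_eq in HN by (apply pow_le; lra).
    destruct (proj2 (Hcod z) eq_refl (l + n * k)%nat ltac:(unfold n; nia)) as [x [Hx Ezx]].
    rewrite Hcat in Ezx.
    assert (E2 : (z - g p = al * (Cpow A n * (x - p)))%C).
    { rewrite Ezx, gd. rewrite <- Hnd, Hnp. reflexivity. }
    assert (Hxp : Cmod (x - p)%C <= M + Cmod p).
    { unfold Cminus. eapply Rle_trans; [apply Cmod_triangle|]. rewrite Cmod_opp.
      pose proof (HM x Hx). lra. }
    assert (Cmod (z - g p)%C <= Cst * Cmod A ^ n).
    { rewrite E2, !Cmod_mult, Cmod_pow. unfold Cst.
      replace (Cmod al * (M + Cmod p) * Cmod A ^ n) with (Cmod al * (Cmod A ^ n * (M + Cmod p))) by ring.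
      apply Rmult_le_compat_l; [apply Cmod_ge_0|]. apply Rmult_le_compat_l; [apply pow_le; lra|]. exact Hxp. }
    apply Rmult_lt_compat_r with (r := Cst + 1) in HN; [|lra].
    unfold Rdiv in HN. rewrite Rmult_assoc, Rinv_l in HN by lra.
    pose proof (pow_le (Cmod A) n ltac:(lra)). nra. }
  assert (Hy : exists y, K y /\ g y <> z).
  { assert (Hy1 : exists y1, K y1 /\ y1 <> y0).
    { apply NNPP; intros H. apply Hns. exists y0. intros y; split.
      - intros Hy. apply NNPP; intros Hne. apply H. exists y; auto.
      - intros ->; auto. }
    destruct Hy1 as [y1 [Hy1 Hne]].
    destruct (classic (g y0 = z)) as [E|E]; [|exists y0; auto].
    exists y1; split; auto. intros E1. apply Hne.
    assert (E3 : (al * (y1 - y0))%C = 0%C) by (rewrite <- gd, E, E1; ring).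
    replace y1 with (y0 + / al * (al * (y1 - y0)))%C by (field; auto).
    rewrite E3. ring. }
  destruct Hy as [y [Hy Hgy]].
  set (d := (g y - z)%C).
  assert (Hd : d <> 0%C).
  { intros E. apply Hgy. replace (g y) with (d + z)%C by (unfold d; ring). rewrite E. ring. }
  set (P := fun n => g (Hn n y)).
  assert (PK : forall n, K (P n)) by (intros n; apply gK, HnK, Hy).
  assert (HP : forall n, P n = (z + Cpow A n * d)%C).
  { intros n. unfold d. rewrite Hz.
    assert (E1 : (P n - g p = al * (Cpow A n * (y - p)))%C).
    { unfold P. rewrite gd, <- Hnd, Hnp. reflexivity. }
    rewrite gd. replace (P n) with (g p + (P n - g p))%C by ring. rewrite E1. ring. }
  apply NNPP; intros Hnot.
  destruct (exists_nonpos_re A HAnz Hnot) as [N HN].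
  set (B := Cpow A N).
  assert (HBnz : B <> 0%C) by (apply Cpow_nz; auto).
  set (mu := Re B ^ 2 + Im B ^ 2).
  assert (Hmu : 0 < mu).
  { unfold mu. rewrite <- Cmod_sq. apply pow_lt. apply Cmod_gt_0. auto. }
  set (ga := -2 * Re B).
  assert (Hga : 0 <= ga) by (unfold ga; fold B in HN; lra).
  set (S := mu + ga + 1).
  set (t := mu / S).
  set (Y := Cplus (Cmult (RtoC (ga / (ga + 1))) (P N)) (Cmult (RtoC (1 - ga / (ga + 1))) (P (N + N)%nat))).
  assert (HY : convex_hull K Y).
  { apply ch_two; auto. split. apply Rdiv_le_0_compat; lra.
    apply Rmult_le_reg_r with (ga + 1); [lra|]. unfold Rdiv. rewrite Rmult_assoc, Rinv_l; lra. }
  assert (Ht : 0 < t < 1).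
  { unfold t, S. split. apply Rdiv_lt_0_compat; lra.
    apply Rmult_lt_reg_r with (mu + ga + 1); [lra|]. unfold Rdiv. rewrite Rmult_assoc, Rinv_l; lra. }
  pose proof (key_id B d) as KI.
  assert (HPN : P N = (z + B * d)%C) by (rewrite HP; reflexivity).
  assert (HP2N : P (N + N)%nat = (z + B * B * d)%C) by (rewrite HP, Cpow_add_r; reflexivity).
  assert (HP0 : P 0%nat = (z + d)%C) by (rewrite HP; simpl; ring).
  assert (Ez : z = Cplus (Cmult (RtoC t) (P 0%nat)) (Cmult (RtoC (1 - t)) Y)).
  { unfold Y. rewrite HPN, HP2N, HP0. fold mu in KI. fold ga in KI.
    unfold t, S. clearbody mu ga.
    destruct z as [z1 z2], d as [d1 d2], B as [b1 b2].
    unfold Cplus, Cmult, RtoC in KI |- *. simpl in KI |- *.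
    injection KI as K1 K2.
    apply injective_projections; simpl.
    - match goal with |- z1 = ?E => match type of K1 with ?L = 0 =>
        assert (X : E - z1 = L / (mu + ga + 1)) by (field; lra) end end.
      rewrite K1 in X. unfold Rdiv in X. rewrite Rmult_0_l in X. lra.
    - match goal with |- z2 = ?E => match type of K2 with ?L = 0 =>
        assert (X : E - z2 = L / (mu + ga + 1)) by (field; lra) end end.
      rewrite K2 in X. unfold Rdiv in X. rewrite Rmult_0_l in X. lra. }
  pose proof (proj2 Hext (P 0%nat) Y t (ch_pt K _ (PK 0%nat)) HY Ht Ez) as EY.
  rewrite <- EY in Ez. apply Hd.
  assert (Ez2 : z = P 0%nat) by (rewrite Ez; apply injective_projections; simpl; ring).
  rewrite HP0 in Ez2. replace d with ((z + d) - z)%C by ring. rewrite <- Ez2. ring.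
Qed.
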